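(* Let $(\bar\xi,\bar x)\in\widetilde\Omega\cap\operatorname{gph}E$ be a local solution to (MPEC). Suppose that: (i) $\varphi$ is locally Lipschitz around $(\bar\xi,\bar x)$; (ii) $\operatorname{gph}E$ is closed; (iii) $\widetilde\Omega$ and $\operatorname{gph}E$ are subtransversal at $(\bar\xi,\bar x)$; (iv) a uniform error bound holds around $(\bar\xi,\bar x)$, i.e. there exist $\delta,\gamma>0$ such that $\operatorname{dist}(x,E(\xi))\le\mathfrak m(\xi,x)/\gamma$ for all $(\xi,x)\in\mathbb B(\bar\xi,\delta)\times\mathbb B(\bar x,\delta)$. Then there exists $\lambda>0$ such that $(\bar\xi,\bar x)$ is a local (unconstrained) minimizer of $$(\xi,x)\mapsto \varphi(\xi,x)+\lambda\Big(\operatorname{dist}(\xi,\Omega)+\frac{\mathfrak m(\xi,x)}{\gamma}\Big).$$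
   Context: $C\subset\mathbb R^m$ nontrivial closed convex pointed cone; $f:\mathbb R^p\times\mathbb R^n\times\mathbb R^n\to\mathbb R^m$; $K:\mathbb R^p\rightrightarrows\mathbb R^n$ has closed graph and nonempty values everywhere. VEP($\xi$): find $x\in K(\xi)$ with $f(\xi,x,z)\in C$ for all $z\in K(\xi)$; $E(\xi)$ is its solution set (with $\operatorname{dist}(x,\emptyset)=+\infty$). $\nu(\xi,x)=\sup_{z\in K(\xi)}\operatorname{dist}(f(\xi,x,z),C)$, $\mu(\xi,x)=\operatorname{dist}(x,K(\xi))$, $\mathfrak m=\nu+\mu$. (MPEC): minimize $\varphi(\xi,x)$ subject to $x\in E(\xi)$, $\xi\in\Omega$, where $\varphi:\mathbb R^p\times\mathbb R^n\to\mathbb R$ and $\Omega\subseteq\mathbb R^p$ is closed; $\widetilde\Omega=\Omega\times\mathbb R^n$. Two sets $S_1,S_2$ are subtransversal at $\bar s\in S_1\cap S_2$ if there exist $\alpha,\delta>0$ such that $(S_1+\alpha\rho\mathbb B)\cap(S_2+\alpha\rho\mathbb B)\cap\mathbb B(\bar s,\delta)\subseteq(S_1\cap S_2)+\rho\mathbb B$ for all $\rho\in[0,\delta)$; equivalently, there exist $\kappa,r>0$ with $\operatorname{dist}(w,S_1\cap S_2)\le\kappa\max\{\operatorname{dist}(w,S_1),\operatorname{dist}(w,S_2)\}$ for all $w\in\mathbb B(\bar s,r)$. *)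

(* Defs.v *)
From HB Require Import structures.
From mathcomp Require Import all_boot all_order all_algebra.
From mathcomp Require Import all_classical all_reals ereal.
Set Implicit Arguments. Unset Strict Implicit. Unset Printing Implicit Defensive.
Import Order.TTheory GRing.Theory Num.Theory.
Local Open Scope classical_set_scope.
Local Open Scope ring_scope.

Section Defs.
Variable R : realType.

Definition enorm (n : nat) (v : 'rV[R]_n) : R := Num.sqrt (\sum_(i < n) v ord0 i ^+ 2).

Definition pnorm (p n : nat) (w : 'rV[R]_p * 'rV[R]_n) : R :=
  Num.sqrt (enorm w.1 ^+ 2 + enorm w.2 ^+ 2).

(* distance to a set, in the extended reals; dist(x, emptyset) = +oo *)
Definition dist (n : nat) (x : 'rV[R]_n) (S : set 'rV[R]_n) : \bar R :=
  ereal_inf [set (enorm (x - s))%:E | s in S].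

Definition pdist (p n : nat) (w : 'rV[R]_p * 'rV[R]_n)
    (S : set ('rV[R]_p * 'rV[R]_n)) : \bar R :=
  ereal_inf [set (pnorm (w.1 - s.1, w.2 - s.2))%:E | s in S].

Definition eclosed (n : nat) (S : set 'rV[R]_n) : Prop :=
  forall x, (forall e : R, 0 < e -> exists2 s, S s & enorm (x - s) < e) -> S x.

Definition pclosed (p n : nat) (S : set ('rV[R]_p * 'rV[R]_n)) : Prop :=
  forall w, (forall e : R, 0 < e ->
     exists2 s, S s & pnorm (w.1 - s.1, w.2 - s.2) < e) -> S w.

Definition nontrivial_closed_convex_pointed_cone (m : nat) (C : set 'rV[R]_m) : Prop :=
  [/\ (exists c, C c) /\ (exists c, C c /\ c <> 0),
      eclosed C,
      (forall c t, C c -> 0 <= t -> C (t *: c)),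
      (forall c d t, C c -> C d -> 0 <= t <= 1 -> C (t *: c + (1 - t) *: d)) &
      (forall c, C c -> C (- c) -> c = 0)].

Definition graph (p n : nat) (K : 'rV[R]_p -> set 'rV[R]_n) : set ('rV[R]_p * 'rV[R]_n) :=
  [set w | K w.1 w.2].

Definition VEPsol (p n m : nat) (C : set 'rV[R]_m)
    (f : 'rV[R]_p -> 'rV[R]_n -> 'rV[R]_n -> 'rV[R]_m)
    (K : 'rV[R]_p -> set 'rV[R]_n) (xi : 'rV[R]_p) : set 'rV[R]_n :=
  [set x | K xi x /\ forall z, K xi z -> C (f xi x z)].

Definition nu_fun (p n m : nat) (C : set 'rV[R]_m)
    (f : 'rV[R]_p -> 'rV[R]_n -> 'rV[R]_n -> 'rV[R]_m)
    (K : 'rV[R]_p -> set 'rV[R]_n) (xi : 'rV[R]_p) (x : 'rV[R]_n) : \bar R :=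
  ereal_sup [set dist (f xi x z) C | z in K xi].

Definition mu_fun (p n : nat) (K : 'rV[R]_p -> set 'rV[R]_n)
    (xi : 'rV[R]_p) (x : 'rV[R]_n) : \bar R := dist x (K xi).

Definition merit (p n m : nat) (C : set 'rV[R]_m)
    (f : 'rV[R]_p -> 'rV[R]_n -> 'rV[R]_n -> 'rV[R]_m)
    (K : 'rV[R]_p -> set 'rV[R]_n) (xi : 'rV[R]_p) (x : 'rV[R]_n) : \bar R :=
  (nu_fun C f K xi x + mu_fun K xi x)%E.

Definition penlarge (p n : nat) (S : set ('rV[R]_p * 'rV[R]_n)) (r : R)
    : set ('rV[R]_p * 'rV[R]_n) :=
  [set w | exists2 s, S s & pnorm (w.1 - s.1, w.2 - s.2) <= r].

Definition pball (p n : nat) (c : 'rV[R]_p * 'rV[R]_n) (r : R)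
    : set ('rV[R]_p * 'rV[R]_n) :=
  [set w | pnorm (w.1 - c.1, w.2 - c.2) <= r].

Definition subtransversal (p n : nat) (S1 S2 : set ('rV[R]_p * 'rV[R]_n))
    (s : 'rV[R]_p * 'rV[R]_n) : Prop :=
  exists alpha delta : R, 0 < alpha /\ 0 < delta /\
    forall rho : R, 0 <= rho -> rho < delta ->
      penlarge S1 (alpha * rho) `&` penlarge S2 (alpha * rho) `&` pball s delta
        `<=` penlarge (S1 `&` S2) rho.

Definition locally_lipschitz (p n : nat) (phi : 'rV[R]_p -> 'rV[R]_n -> R)
    (w0 : 'rV[R]_p * 'rV[R]_n) : Prop :=
  exists L r : R, 0 < r /\ forall u v,
    pnorm (u.1 - w0.1, u.2 - w0.2) < r -> pnorm (v.1 - w0.1, v.2 - w0.2) < r ->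
    `|phi u.1 u.2 - phi v.1 v.2| <= L * pnorm (u.1 - v.1, u.2 - v.2).

End Defs.

(* Main.v *)
Require Import Defs.
From mathcomp Require Import all_boot all_order all_algebra.
From mathcomp Require Import all_classical all_reals ereal.
From mathcomp Require Import lra ring.
Import Order.TTheory GRing.Theory Num.Theory.
Local Open Scope classical_set_scope.
Local Open Scope ring_scope.

Set Implicit Arguments. Unset Strict Implicit.
Section H.
Variable R : realType.

Lemma enorm_ge0 k (v : 'rV[R]_k) : 0 <= enorm v.
Proof. exact: sqrtr_ge0. Qed.

Lemma sumsq_ge0 k (v : 'rV[R]_k) : 0 <= \sum_(i < k) v ord0 i ^+ 2.
Proof. by apply: sumr_ge0 => i _; rewrite sqr_ge0. Qed.

Lemma enorm_sqr k (v : 'rV[R]_k) : enorm v ^+ 2 = \sum_(i < k) v ord0 i ^+ 2.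
Proof. by rewrite /enorm sqr_sqrtr // sumsq_ge0. Qed.

Lemma enormN k (v : 'rV[R]_k) : enorm (- v) = enorm v.
Proof. by rewrite /enorm; congr Num.sqrt; apply: eq_bigr => i _; rewrite mxE sqrrN. Qed.

Lemma enorm0 k : enorm (0 : 'rV[R]_k) = 0.
Proof. rewrite /enorm big1 ?sqrtr0 // => i _; by rewrite mxE expr0n. Qed.

Lemma pnorm_ge0 p n (w : 'rV[R]_p * 'rV[R]_n) : 0 <= pnorm w.
Proof. exact: sqrtr_ge0. Qed.

Lemma pnormN p n (a : 'rV[R]_p) (b : 'rV[R]_n) : pnorm (- a, - b) = pnorm (a, b).
Proof. by rewrite /pnorm /= !enormN. Qed.

Lemma pnorm_l p n (a : 'rV[R]_p) : pnorm (a, (0 : 'rV[R]_n)) = enorm a.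
Proof. by rewrite /pnorm /= enorm0 expr0n addr0 sqrtr_sqr ger0_norm // enorm_ge0. Qed.

Lemma pnorm_r p n (b : 'rV[R]_n) : pnorm ((0 : 'rV[R]_p), b) = enorm b.
Proof. by rewrite /pnorm /= enorm0 expr0n add0r sqrtr_sqr ger0_norm // enorm_ge0. Qed.

Lemma enorm_le_pnorm1 p n (a : 'rV[R]_p) (b : 'rV[R]_n) : enorm a <= pnorm (a, b).
Proof.
rewrite /pnorm /= -{1}(ger0_norm (@enorm_ge0 _ a)) -sqrtr_sqr ler_sqrt.
  by rewrite lerDl sqr_ge0.
by rewrite addr_ge0 // sqr_ge0.
Qed.

Lemma enorm_le_pnorm2 p n (a : 'rV[R]_p) (b : 'rV[R]_n) : enorm b <= pnorm (a, b).
Proof.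
rewrite /pnorm /= -{1}(ger0_norm (@enorm_ge0 _ b)) -sqrtr_sqr ler_sqrt.
  by rewrite lerDr sqr_ge0.
by rewrite addr_ge0 // sqr_ge0.
Qed.

Lemma enorm_addsq k (u v : 'rV[R]_k) :
  enorm (u + v) ^+ 2 <= 2 * enorm u ^+ 2 + 2 * enorm v ^+ 2.
Proof.
rewrite !enorm_sqr !mulr_sumr -big_split /=; apply: ler_sum => i _.
rewrite mxE; set x := u ord0 i; set y := v ord0 i.
have := sqr_ge0 (x - y); rewrite !expr2; nra.
Qed.

Lemma pnorm_sqr p n (w : 'rV[R]_p * 'rV[R]_n) :
  pnorm w ^+ 2 = enorm w.1 ^+ 2 + enorm w.2 ^+ 2.
Proof. by rewrite /pnorm sqr_sqrtr // addr_ge0 // sqr_ge0. Qed.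

Lemma pnorm_add p n (u1 v1 : 'rV[R]_p) (u2 v2 : 'rV[R]_n) :
  pnorm (u1 + v1, u2 + v2) <= 2 * (pnorm (u1, u2) + pnorm (v1, v2)).
Proof.
have h1 := pnorm_ge0 (u1, u2); have h2 := pnorm_ge0 (v1, v2).
rewrite -(ger0_norm (pnorm_ge0 (u1 + v1, u2 + v2))) -sqrtr_sqr.
have -> : 2 * (pnorm (u1, u2) + pnorm (v1, v2)) =
   Num.sqrt ((2 * (pnorm (u1, u2) + pnorm (v1, v2))) ^+ 2).
  by rewrite sqrtr_sqr ger0_norm // mulr_ge0 // addr_ge0.
rewrite ler_sqrt ?sqr_ge0 //.
rewrite pnorm_sqr /=.
have e1 := enorm_addsq u1 v1; have e2 := enorm_addsq u2 v2.
have q1 := pnorm_sqr (u1, u2); have q2 := pnorm_sqr (v1, v2).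
rewrite /= in q1 q2.
nra.
Qed.

Lemma pnorm_tri p n (a1 b1 c1 : 'rV[R]_p) (a2 b2 c2 : 'rV[R]_n) :
  pnorm (a1 - c1, a2 - c2) <= 2 * (pnorm (a1 - b1, a2 - b2) + pnorm (b1 - c1, b2 - c2)).
Proof.
have -> : a1 - c1 = (a1 - b1) + (b1 - c1) by rewrite addrA subrK.
have -> : a2 - c2 = (a2 - b2) + (b2 - c2) by rewrite addrA subrK.
exact: pnorm_add.
Qed.

Lemma pnorm_sym p n (a1 b1 : 'rV[R]_p) (a2 b2 : 'rV[R]_n) :
  pnorm (a1 - b1, a2 - b2) = pnorm (b1 - a1, b2 - a2).
Proof. by rewrite -pnormN !opprB. Qed.

Lemma dist_ge0 k (x : 'rV[R]_k) S : (0 <= dist x S)%E.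
Proof. apply/ereal_infP => y [s _ <-]; rewrite lee_fin; exact: enorm_ge0. Qed.

Lemma dist_le k (x : 'rV[R]_k) S s : S s -> (dist x S <= (enorm (x - s))%:E)%E.
Proof. by move=> Ss; apply: ge_ereal_inf; exists (enorm (x - s))%:E => //; exists s. Qed.

Lemma dist_mem k (x : 'rV[R]_k) (S : set _) : S x -> dist x S = 0%E.
Proof.
move=> Sx; apply/eqP; rewrite eq_le dist_ge0 andbT.
by have := dist_le x Sx; rewrite subrr enorm0.
Qed.

Lemma dist_approx k (x : 'rV[R]_k) S d e : dist x S = d%:E -> 0 < e ->
  exists2 s, S s & enorm (x - s) < d + e.
Proof.
move=> hd he.
have : (dist x S < (d + e)%:E)%E by rewrite hd lte_fin ltrDl.
move=> /ereal_inf_lt [y [s Ss <-]]; rewrite lte_fin => h; by exists s.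
Qed.

Lemma approx_le (x y c r : R) : 0 < r -> 0 <= c ->
  (forall eta, 0 < eta -> eta < r -> x <= y + c * eta) -> x <= y.
Proof.
move=> rp cp H; apply/ler_addgt0Pr => e ep.
set eta := Num.min (r / 2) (e / (c + 1)).
have etap : 0 < eta by rewrite lt_min divr_gt0 // ?divr_gt0 //; lra.
have etar : eta < r.
  have : eta <= r / 2 by rewrite /eta ge_min lexx.
  lra.
have := H eta etap etar.
have : eta <= e / (c + 1) by rewrite /eta ge_min lexx orbT.
rewrite ler_pdivlMr; last lra.
move=> h1 h2; nra.
Qed.

End H.

Theorem mainTheorem8 (R : realType) (p n m : nat) (C : set 'rV[R]_m)
    (f : 'rV[R]_p -> 'rV[R]_n -> 'rV[R]_n -> 'rV[R]_m)
    (K : 'rV[R]_p -> set 'rV[R]_n)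
    (phi : 'rV[R]_p -> 'rV[R]_n -> R) (Omega : set 'rV[R]_p)
    (xib : 'rV[R]_p) (xb : 'rV[R]_n) :
  nontrivial_closed_convex_pointed_cone C ->
  pclosed (graph K) ->
  (forall xi, exists x, K xi x) ->
  eclosed Omega ->
  (* (xib, xb) in Omega~ \cap gph E *)
  Omega xib -> VEPsol C f K xib xb ->
  (* local solution to (MPEC) *)
  (exists r : R, 0 < r /\ forall xi x, Omega xi -> VEPsol C f K xi x ->
      pnorm (xi - xib, x - xb) < r -> phi xib xb <= phi xi x) ->
  (* (i) *) locally_lipschitz phi (xib, xb) ->
  (* (ii) *) pclosed (graph (VEPsol C f K)) ->
  (* (iii) *) subtransversal [set w | Omega w.1] (graph (VEPsol C f K)) (xib, xb) ->
  (* (iv) uniform error bound *)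
  forall delta gamma : R, 0 < delta -> 0 < gamma ->
  (forall xi x, enorm (xi - xib) <= delta -> enorm (x - xb) <= delta ->
      (dist x (VEPsol C f K xi) <= merit C f K xi x * (gamma^-1)%:E)%E) ->
  exists lambda : R, 0 < lambda /\
    exists r : R, 0 < r /\ forall xi x, pnorm (xi - xib, x - xb) < r ->
      ((phi xib xb)%:E + lambda%:E * (dist xib Omega + merit C f K xib xb * (gamma^-1)%:E)
        <= (phi xi x)%:E + lambda%:E * (dist xi Omega + merit C f K xi x * (gamma^-1)%:E))%E.
Proof.
move=> hC hgK hKne hOm Oxib Exb [r0 [r0p Hmin]] [L [rL [rLp HL]]] hgE
  [al [de' [alp [dep Hsub]]]] delta gamma dp gp Heb.
set E := VEPsol C f K in Hmin hgE Hsub Heb *.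
set Lp := Num.max L 0.
have Lp0 : 0 <= Lp by rewrite le_max lexx orbT.
have LLp : L <= Lp by rewrite le_max lexx.
set B := Num.min (Num.min r0 rL) (Num.min de' delta).
have Bp : 0 < B by rewrite !lt_min r0p rLp dep dp.
have Br0 : B <= r0 by rewrite /B !ge_min ?lexx.
have BrL : B <= rL by rewrite /B !ge_min ?lexx ?orbT.
have Bde : B <= de' by rewrite /B !ge_min ?lexx ?orbT.
have Bd : B <= delta by rewrite /B !ge_min ?lexx ?orbT.
set r := Num.min B (B * al) / 8.
have rp : 0 < r by rewrite divr_gt0 // lt_min Bp mulr_gt0.
have rB : 8 * r <= B by rewrite /r mulrC divfK // ge_min lexx.
have rBa : 8 * r <= B * al by rewrite /r mulrC divfK // ge_min lexx orbT.
have key : forall xi x, pnorm (xi - xib, x - xb) < r -> forall d1 d2,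
    dist xi Omega = d1%:E -> dist x (E xi) = d2%:E ->
    phi xib xb <= phi xi x + Lp / al * Num.max d1 d2.
  move=> xi x hw d1 d2 hd1 hd2.
  set t := pnorm (xi - xib, x - xb).
  have t0 : 0 <= t by exact: pnorm_ge0.
  have tr : t < r by [].
  have tB : t <= B by lra.
  have d10 : 0 <= d1 by rewrite -lee_fin -hd1 dist_ge0.
  have d20 : 0 <= d2 by rewrite -lee_fin -hd2 dist_ge0.
  set a := Num.max d1 d2.
  have ad1 : d1 <= a by rewrite le_max lexx.
  have ad2 : d2 <= a by rewrite le_max lexx orbT.
  apply: (approx_le (r := r) (c := Lp / al)) => //; first by rewrite divr_ge0 // ltW.
  move=> eta etap etar.
  have step : forall c, 0 <= c -> c <= a -> c <= t ->
      (exists2 s1 : 'rV[R]_p * 'rV[R]_n, Omega s1.1 & pnorm (xi - s1.1, x - s1.2) <= c + eta) ->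
      (exists2 s2 : 'rV[R]_p * 'rV[R]_n, E s2.1 s2.2 & pnorm (xi - s2.1, x - s2.2) <= c + eta) ->
      phi xib xb <= phi xi x + Lp / al * (a + eta).
    move=> c c0 ca ct [s1 s1O s1n] [s2 s2E s2n].
    set rho := (c + eta) / al.
    have rho0 : 0 <= rho by rewrite divr_ge0 // ?ltW //; lra.
    have alrho : al * rho = c + eta by rewrite /rho mulrC divfK // gt_eqF.
    have rhoB : rho < B / 4.
      rewrite /rho ltr_pdivrMr // mulrAC; lra.
    have rhode : rho < de' by lra.
    have hmem : (penlarge (p := p) (n := n) (fun w => Omega w.1) (al * rho) `&`
        penlarge (graph E) (al * rho) `&` pball (xib, xb) de') (xi, x).
      split; [split|].
      + by exists s1; rewrite // alrho.
      + by exists s2; rewrite // alrho.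
      + rewrite /pball /=; lra.
    have [s [sO sE] sn] := Hsub rho rho0 rhode (xi, x) hmem.
    have sn2 : pnorm (s.1 - xib, s.2 - xb) < B.
      apply: (le_lt_trans (pnorm_tri _ xi _ _ x _)).
      rewrite pnorm_sym; lra.
    have := Hmin s.1 s.2 sO sE (lt_le_trans sn2 Br0).
    have hwL : pnorm (xi - xib, x - xb) < rL by lra.
    have h := HL (s.1, s.2) (xi, x) (lt_le_trans sn2 BrL) hwL.
    rewrite /= in h.
    have hmin := Hmin s.1 s.2 sO sE (lt_le_trans sn2 Br0).
    rewrite /= pnorm_sym in sn.
    have pn0 := pnorm_ge0 (s.1 - xi, s.2 - x).
    have h1 : L * pnorm (s.1 - xi, s.2 - x) <= Lp * pnorm (s.1 - xi, s.2 - x)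
      by rewrite ler_wpM2r.
    have h2 : Lp * pnorm (s.1 - xi, s.2 - x) <= Lp * rho by rewrite ler_wpM2l.
    have h3 : Lp * rho <= Lp / al * (a + eta).
      have -> : Lp * rho = Lp / al * (c + eta) by rewrite /rho; ring.
      rewrite ler_wpM2l ?divr_ge0 ?(ltW alp) //; lra.
    have h4 := ler_norm (phi s.1 s.2 - phi xi x).
    lra.
  rewrite -addrA -mulrDr.
  have a0 : 0 <= a by exact: le_trans d10 ad1.
  case: (lerP t a) => hta.
    apply: (step t t0 hta (lexx t)).
      by exists (xib, xb) => //=; rewrite -/t lerDl ltW.
    by exists (xib, xb) => //=; rewrite -/t lerDl ltW.
  apply: (step a a0 (lexx a) (ltW hta)).
    have [o oO on] := dist_approx hd1 etap.
    exists (o, x) => //=; rewrite subrr pnorm_l; lra.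
  have [e eE en] := dist_approx hd2 etap.
  exists (xi, e) => //=; rewrite subrr pnorm_r; lra.
have nu0 : nu_fun C f K xib xb = 0%E.
  apply/eqP; rewrite eq_le; apply/andP; split.
    apply/ereal_supP => y [z Kz <-]; rewrite dist_mem //; exact: Exb.2.
  apply: le_ereal_sup_tmp; exists 0%E => //; exists xb; first exact: Exb.1.
  by rewrite dist_mem //; apply: Exb.2; exact: Exb.1.
have mer0 : merit C f K xib xb = 0%E.
  by rewrite /merit nu0 /mu_fun dist_mem ?adde0 //; exact: Exb.1.
have alp' : 0 <= Lp / al by rewrite divr_ge0 // ltW.
exists (Lp / al + 1); split; first lra.
exists r; split => // xi x hw.
rewrite dist_mem // mer0 mul0e adde0 mule0 adde0.
have hd1 := dist_le xi Oxib.
have hd10 := dist_ge0 xi Omega.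
have en1 : enorm (xi - xib) <= delta.
  have := enorm_le_pnorm1 (xi - xib) (x - xb); lra.
have en2 : enorm (x - xb) <= delta.
  have := enorm_le_pnorm2 (xi - xib) (x - xb); lra.
have heb := Heb xi x en1 en2.
have hd20 := dist_ge0 x (E xi).
have lp : (0 < (Lp / al + 1)%:E)%E by rewrite lte_fin; lra.
case hD: (dist xi Omega) hd1 hd10 => [d1| |] hd1 hd10 //.
case hM: (merit C f K xi x) heb => [M| |] heb.
- case hD2: (dist x (E xi)) heb hd20 => [d2| |] heb hd20 //.
  have := key xi x hw d1 d2 hD hD2.
  rewrite -!EFinM -!EFinD lee_fin.
  rewrite lee_fin in heb; rewrite lee_fin in hd20; rewrite lee_fin in hd10.
  have hmx : Num.max d1 d2 <= d1 + d2.
    by rewrite ge_max; apply/andP; split; lra.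
  move=> hk.
  have : Lp / al * Num.max d1 d2 <= Lp / al * (d1 + M * gamma^-1).
    apply: ler_wpM2l => //; lra.
  nra.
- rewrite gt0_mulye ?lte_fin ?invr_gt0 // addey // gt0_muley //.
  by rewrite addey // leey.
- by move: heb; rewrite gt0_mulNye ?lte_fin ?invr_gt0 // leeNy_eq => /eqP hh;
    rewrite hh in hd20.
Qed.
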